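(* Let $a_1,a_2\ge0$ and $D=D_{a_1,a_2}$. For any horizontal edge $h\in D_1$ and vertical edge $v_j\in D_2$ such that $h$ comes before $v_j$ along $D$ (traversed from $(0,0)$ to $(a_1,a_2)$), letting $hv_j$ be the subpath of $D$ from $h$ to $v_j$ inclusive, we have $$a_1\big(|(hv_j)_2|-1\big)<a_2\,|(hv_j)_1|.$$
   Context: $D=D_{a_1,a_2}$ is the maximal Dyck path: the lattice path of unit East and North steps from $(0,0)$ to $(a_1,a_2)$ staying weakly below the diagonal of the rectangle $[0,a_1]\times[0,a_2]$ and closest to it (every lattice point above $D$ is strictly above the diagonal). $D_1$ is its set of horizontal edges, $D_2=\{v_1,\dots,v_{a_2}\}$ its vertical edges, $v_j$ being the North step ending at $y$-coordinate $j$. For a subpath $P$, $(P)_1$ and $(P)_2$ denote its sets of horizontal and vertical edges. *)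

(* Defs.v *)
From mathcomp Require Import all_boot.
Set Implicit Arguments. Unset Strict Implicit. Unset Printing Implicit Defensive.

(* A lattice path from (0,0) with unit steps is encoded as a sequence of steps:
   [true] = North (vertical) step, [false] = East (horizontal) step.
   The k-th edge of the path is the k-th step (0-based position). *)

(* Greedy construction of the maximal Dyck path D_{a1,a2}: standing at the lattice
   point (x,y), step North iff y < a2 and the point (x,y+1) is weakly below the
   diagonal of [0,a1]x[0,a2], i.e. (y+1)*a1 <= x*a2; otherwise step East
   (if x < a1).  This is the path weakly below the diagonal such that every lattice
   point strictly above it is strictly above the diagonal. *)
Fixpoint maxdyck_aux (a1 a2 fuel x y : nat) : seq bool :=
  match fuel with
  | 0 => [::]
  | n.+1 =>
      if (y < a2) && ((y + 1) * a1 <= x * a2) then true :: maxdyck_aux a1 a2 n x y.+1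
      else if x < a1 then false :: maxdyck_aux a1 a2 n x.+1 y
      else [::]
  end.

Definition maxdyck (a1 a2 : nat) : seq bool := maxdyck_aux a1 a2 (a1 + a2) 0 0.

Definition subpath (D : seq bool) (i k : nat) : seq bool := drop i (take k.+1 D).

Definition n_horiz (P : seq bool) : nat := count (fun b => ~~ b) P.
Definition n_vert (P : seq bool) : nat := count id P.

(* v_j : position (0-based) in D of the North step ending at height j (1 <= j <= a2),
   i.e. the j-th North step of D. *)
Definition vedge (D : seq bool) (j : nat) : nat :=
  nth 0 (filter (fun k => nth false D k) (iota 0 (size D))) j.-1.

(* Main.v *)
Require Import Defs.
From mathcomp Require Import all_boot zify.

Lemma aux_prop a1 a2 n x y k :
  k < size (maxdyck_aux a1 a2 n x y) ->
  let s := maxdyck_aux a1 a2 n x y in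
  let xk := x + count (fun b => ~~ b) (take k s) in
  let yk := y + count id (take k s) in
  if nth false s k then (yk < a2) && ((yk+1)*a1 <= xk*a2)
  else ~~((yk < a2) && ((yk+1)*a1 <= xk*a2)).
Proof.
elim: n x y k => [|n IH] x y k //=.
case: ifP => [C|C].
  case: k => [|k] /=; first by rewrite !addn0 C.
  move=> Hk; have := IH x y.+1 k Hk => /=.
  by rewrite !add0n !add1n !addnS !addSn.
case: ifP => // _.
case: k => [|k] /=; first by rewrite !addn0 C.
move=> Hk; have := IH x.+1 y k Hk => /=.
by rewrite !add0n !add1n !addnS !addSn.
Qed.

Theorem corollary3p3 (a1 a2 : nat) (h j : nat) :
  let D := maxdyck a1 a2 in
  h < size D -> nth true D h = false ->
  1 <= j <= a2 ->
  h < vedge D j ->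
  let P := subpath D h (vedge D j) in
  a1 * (n_vert P - 1) < a2 * n_horiz P.
Proof.
move=> D hs hD _ hv /=; set P := subpath D h (vedge D j).
set v := vedge D j.
have [vs vD] : v < size D /\ nth false D v.
  move: hv; rewrite /v /vedge.
  set F := filter _ _.
  case: (ltnP j.-1 (size F)) => Hj; last by rewrite nth_default.
  have : nth 0 F j.-1 \in F by apply: mem_nth.
  by rewrite mem_filter mem_iota add0n => /andP[H1 /andP[_ H2]]; split.
have hD' : nth false D h = false by rewrite (set_nth_default true).
move: (@aux_prop a1 a2 (a1+a2) 0 0 h hs) => /=; rewrite -/(maxdyck a1 a2) -/D hD' => Ph.
move: (@aux_prop a1 a2 (a1+a2) 0 0 v vs) => /=; rewrite -/(maxdyck a1 a2) -/D vD => Pv.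
move/andP: Pv => [Pv1 Pv2].
have hle1 : h <= v.+1 by rewrite ltnW // ltnS ltnW.
have hle2 : h <= v by rewrite ltnW.
have Htk : take v.+1 D = take h D ++ P.
  by rewrite /P /subpath -/v -{1}(cat_take_drop h (take v.+1 D)) take_takel.
have Htv : take v.+1 D = rcons (take v D) true.
  by rewrite (take_nth false) // vD.
have Ehv : count id (take h D) <= count id (take v D).
  by rewrite -(cat_take_drop h (take v D)) take_takel // count_cat leq_addr.
have Ehh : count (fun b => ~~ b) (take h D) <= count (fun b => ~~ b) (take v D).
  by rewrite -(cat_take_drop h (take v D)) take_takel // count_cat leq_addr.
have C1 := f_equal (count id) Htk.
have C2 := f_equal (count (fun b => ~~ b)) Htk.
rewrite Htv !count_cat -!cats1 !count_cat /= in C1 C2.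
rewrite /n_vert /n_horiz.
rewrite !add0n in Ph Pv1 Pv2.
have Yh : count id (take h D) < a2 by apply: leq_ltn_trans Pv1.
rewrite Yh /= -ltnNge in Ph.
nia.
Qed.
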